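(* Let $A=\{a_0,a_1,\dots,a_{k-1}\}\subseteq\mathcal{C}_n$ with $a_0<\dots<a_{k-1}$, and assume the simplex $\sigma^{(n)}_k(A)$ is internal, i.e. $0\notin A$ and $n-1\notin A$. Let $m\in\{0,\dots,k-1\}$. Then the set $\mathcal{DN}^{\,2}_m=\{\overline{a_m}\}\cup\mathcal{L}^{n-1}_{a_m}\left(\sigma^{(n)}_k(A)\right)\cup\mathcal{L}^{n-2}_{a_m}\left(\sigma^{(n)}_k(A)\right)$ is a subsemiring of $\sigma^{(n)}_k(A)$.
   Context: $\mathcal{C}_n=\{0,1,\dots,n-1\}$ with its usual order; $\widehat{\mathcal{E}}_{\mathcal{C}_n}$ is the set of all order-preserving maps $\mathcal{C}_n\to\mathcal{C}_n$ (not required to fix $0$), a semiring with $(\alpha+\beta)(x)=\max(\alpha(x),\beta(x))$ and $(\alpha\cdot\beta)(x)=\beta(\alpha(x))$. The simplex $\sigma^{(n)}_k(A)$ is the set of all $\alpha\in\widehat{\mathcal{E}}_{\mathcal{C}_n}$ with $\mathrm{im}(\alpha)\subseteq A$. $\overline{x}$ is the constant map with value $x$. For $s\in\{0,\dots,n-1\}$, the layer $\mathcal{L}^{s}_{a_m}\left(\sigma^{(n)}_k(A)\right)$ is the set of $\alpha\in\sigma^{(n)}_k(A)$ with exactly $s$ elements $i\in\mathcal{C}_n$ satisfying $\alpha(i)=a_m$. *)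

(* Defs.v *)
From mathcomp Require Import all_boot.
Set Implicit Arguments. Unset Strict Implicit. Unset Printing Implicit Defensive.

(* C_n = 'I_n with its usual order; elements of \hat E_{C_n} are finite
   functions 'I_n -> 'I_n that are order-preserving. *)
Definition order_preserving (n : nat) (f : {ffun 'I_n -> 'I_n}) : bool :=
  [forall x : 'I_n, forall y : 'I_n, (x <= y)%N ==> (f x <= f y)%N].

Definition emap_add (n : nat) (f g : {ffun 'I_n -> 'I_n}) : {ffun 'I_n -> 'I_n} :=
  [ffun x => if (f x <= g x)%N then g x else f x].

Definition emap_mul (n : nat) (f g : {ffun 'I_n -> 'I_n}) : {ffun 'I_n -> 'I_n} :=
  [ffun x => g (f x)].

Definition emap_const (n : nat) (c : 'I_n) : {ffun 'I_n -> 'I_n} := [ffun _ => c].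

Definition simplex (n : nat) (A : {set 'I_n}) : {set {ffun 'I_n -> 'I_n}} :=
  [set f | order_preserving f && [forall x, f x \in A]].

Definition layer (n : nat) (A : {set 'I_n}) (s : nat) (c : 'I_n)
  : {set {ffun 'I_n -> 'I_n}} :=
  [set f in simplex A | #|[set i | f i == c]| == s].

Definition DN2 (n : nat) (A : {set 'I_n}) (c : 'I_n) : {set {ffun 'I_n -> 'I_n}} :=
  emap_const c |: (layer A n.-1 c :|: layer A (n - 2) c).

(* Main.v *)
Require Import Defs.
From mathcomp Require Import all_boot.
From mathcomp Require Import zify.

Section S.
Variable n : nat.
Variable A : {set 'I_n.+3}.
Hypothesis hA : forall x, x \in A -> (0 < x)%N && (x < n.+2)%N.
Variable c : 'I_n.+3.
Hypothesis cA : c \in A.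

Definition fib (f : {ffun 'I_n.+3 -> 'I_n.+3}) := [set i | f i == c].

Lemma simplexE (f : {ffun 'I_n.+3 -> 'I_n.+3}) : (f \in simplex A) = order_preserving f && [forall x, f x \in A].
Proof. by rewrite /simplex inE. Qed.

Lemma opP (f : {ffun 'I_n.+3 -> 'I_n.+3}) (x y : 'I_n.+3) : order_preserving f -> (x <= y)%N -> (f x <= f y)%N.
Proof. by move=> /forallP /(_ x) /forallP /(_ y) /implyP; apply. Qed.
Arguments opP [f x y].

Lemma const_simplex : emap_const c \in simplex A.
Proof.
rewrite simplexE; apply/andP; split.
  by apply/forallP => x; apply/forallP => y; rewrite !ffunE leqnn implybT.
by apply/forallP => x; rewrite ffunE.
Qed.

Lemma addE (f g : {ffun 'I_n.+3 -> 'I_n.+3}) (x : 'I_n.+3) : val (emap_add f g x) = maxn (f x) (g x).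
Proof. rewrite ffunE; case: ifP => h /=; rewrite /maxn; case: ltnP; lia. Qed.

Lemma add_simplex (f g : {ffun 'I_n.+3 -> 'I_n.+3}) : f \in simplex A -> g \in simplex A -> emap_add f g \in simplex A.
Proof.
rewrite !simplexE => /andP [fo /forallP fA] /andP [go /forallP gA].
apply/andP; split.
  apply/forallP => x; apply/forallP => y; apply/implyP => xy.
  rewrite !addE. have := opP fo xy; have := opP go xy; lia.
by apply/forallP => x; rewrite ffunE; case: ifP.
Qed.

Lemma mul_simplex (f g : {ffun 'I_n.+3 -> 'I_n.+3}) : f \in simplex A -> g \in simplex A -> emap_mul f g \in simplex A.
Proof.
rewrite !simplexE => /andP [fo /forallP fA] /andP [go /forallP gA].
apply/andP; split.
  apply/forallP => x; apply/forallP => y; apply/implyP => xy.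
  by rewrite !ffunE; apply: opP go _; apply: opP fo _.
by apply/forallP => x; rewrite ffunE.
Qed.

Lemma add_fib (f g : {ffun 'I_n.+3 -> 'I_n.+3}) : order_preserving f -> order_preserving g ->
  (fib f \subset fib (emap_add f g)) || (fib g \subset fib (emap_add f g)).
Proof.
move=> fo go.
case: (boolP [forall x, (c < g x)%N ==> (c < f x)%N]) => [/forallP H|].
  apply/orP; left; apply/subsetP => x; rewrite !inE => /eqP fx.
  have gx : (g x <= c)%N by move: (H x); rewrite fx ltnn implybF -leqNgt.
  apply/eqP/val_inj; rewrite addE fx. exact: (maxn_idPl gx).
rewrite negb_forall => /existsP [x0]; rewrite negb_imply => /andP [g0 f0].
apply/orP; right; apply/subsetP => x; rewrite !inE => /eqP gx.
apply/eqP/val_inj; rewrite addE gx.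
have : (f x <= c)%N.
  rewrite leqNgt; apply/negP => fxc.
  case: (leqP x x0) => h.
    by have := opP fo h; move: f0; rewrite -leqNgt; lia.
  by have := opP go (ltnW h); rewrite gx; lia.
by move=> h; exact: (maxn_idPr h).
Qed.

Lemma mul_fib (f g : {ffun 'I_n.+3 -> 'I_n.+3}) : g c = c -> fib f \subset fib (emap_mul f g).
Proof. by move=> gc; apply/subsetP => x; rewrite !inE ffunE => /eqP ->; rewrite gc. Qed.

Lemma three_bad (f : {ffun 'I_n.+3 -> 'I_n.+3}) (p q r : 'I_n.+3) : p != q -> p != r -> q != r ->
  f p != c -> f q != c -> f r != c -> (#|fib f| + 3 <= n.+3)%N.
Proof.
move=> pq pr qr fp fq fr.
have sub : [set p; q; r] \subset ~: fib f.
  by apply/subsetP => x; rewrite !inE => /orP [/orP [] |] /eqP ->.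
have := subset_leq_card sub.
have := cardsC (fib f); rewrite card_ord.
have -> : #|[set p; q; r]| = 3.
  rewrite setUC cardsU1 cards2 !inE negb_or pq eq_sym pr eq_sym qr.  by [].
lia.
Qed.

Lemma fix_c (g : {ffun 'I_n.+3 -> 'I_n.+3}) : g \in simplex A -> (n.+1 <= #|fib g|)%N -> g c = c.
Proof.
rewrite simplexE => /andP [go /forallP gA] hc.
apply/val_inj/eqP; rewrite eqn_leq; apply/andP; split; rewrite leqNgt; apply/negP => /= h.
-
  have := hA _ (gA ord_max); have := hA _ (gA c).
  have le1 : (g c <= g ord_max)%N by apply: opP go _; rewrite /= -ltnS ltn_ord.
  move=> /andP [_ h1] /andP [_ h2].
  have hcn : (c < n.+1)%N by lia.
  pose q : 'I_n.+3 := inord n.+1.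
  have qv : nat_of_ord q = n.+1 by rewrite inordK.
  have leq1 : (g c <= g q)%N by apply: opP go _; rewrite qv; lia.
  have p1 : c != q by apply/eqP => e; move: hcn; rewrite e qv ltnn.
  have p2 : c != ord_max by apply/eqP => e; move: hcn; rewrite e /=; lia.
  have p3 : q != ord_max by apply/eqP => e; move: qv; rewrite e /=; lia.
  have p4 : g c != c by apply/eqP => e; move: h; rewrite e ltnn.
  have p5 : g q != c by apply/eqP => e; move: h leq1; rewrite e; lia.
  have p6 : g ord_max != c by apply/eqP => e; move: h le1; rewrite e; lia.
  have := @three_bad g _ _ _ p1 p2 p3 p4 p5 p6; lia.
-
  have := hA _ (gA ord0); have := hA _ (gA c).
  have le1 : (g ord0 <= g c)%N by apply: opP go _.
  move=> /andP [h1 _] /andP [h2 _].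
  have hcn : (1 < c)%N by lia.
  pose q : 'I_n.+3 := inord 1.
  have qv : nat_of_ord q = 1 by rewrite inordK.
  have leq1 : (g q <= g c)%N by apply: opP go _; rewrite qv; lia.
  have p1 : c != q by apply/eqP => e; move: hcn; rewrite e qv ltnn.
  have p2 : c != ord0 by apply/eqP => e; move: hcn; rewrite e /=; lia.
  have p3 : q != ord0 by apply/eqP => e; move: qv; rewrite e /=; lia.
  have p4 : g c != c by apply/eqP => e; move: h; rewrite e ltnn.
  have p5 : g q != c by apply/eqP => e; move: h leq1; rewrite e; lia.
  have p6 : g ord0 != c by apply/eqP => e; move: h le1; rewrite e; lia.
  have := @three_bad g _ _ _ p1 p2 p3 p4 p5 p6; lia.
Qed.

Lemma DN2E (f : {ffun 'I_n.+3 -> 'I_n.+3}) : (f \in DN2 A c) = (f \in simplex A) && (n.+1 <= #|fib f|)%N.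
Proof.
rewrite /DN2 /layer; apply/idP/idP.
  case/setU1P => [->|].
    rewrite const_simplex /=.
    have -> : fib (emap_const c) = setT by apply/setP => x; rewrite !inE ffunE eqxx.
    by rewrite cardsT card_ord; lia.
  by case/setUP; rewrite inE => /andP [-> /eqP ->]; rewrite /= ?subSS ?subn0.
case/andP => fs hc.
have hm : (#|fib f| <= n.+3)%N by have := max_card (pred_of_set (fib f)); rewrite card_ord.
have [e|ne] := eqVneq #|fib f| n.+3.
  apply/setU1P; left; apply/ffunP => x; rewrite ffunE.
  have : fib f = setT by apply/eqP; rewrite eqEcard subsetT cardsT card_ord e leqnn.
  by move/setP => /(_ x); rewrite !inE => /eqP.
apply/setU1P; right; apply/setUP.
have [e2|ne2] := eqVneq #|fib f| n.+2.
  by left; rewrite inE fs /=; apply/eqP; rewrite /fib in e2; rewrite e2.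
right; rewrite inE fs /= (_ : n.+3 - 2 = n.+1) //; apply/eqP; move: ne ne2 hc hm; rewrite /fib; move: #|_| => s /eqP ne /eqP ne2 hc hm.
lia.
Qed.

End S.

Theorem proposition4 (n k : nat) (a : 'I_k -> 'I_n)
  (a_incr : forall i j : 'I_k, (i < j)%N -> (a i < a j)%N)
  (internal : forall i : 'I_k, (val (a i) != 0%N) && (val (a i) != n.-1))
  (m : 'I_k) :
  let A := [set a i | i in 'I_k] in
  DN2 A (a m) \subset simplex A /\
  (forall f g, f \in DN2 A (a m) -> g \in DN2 A (a m) ->
     emap_add f g \in DN2 A (a m) /\ emap_mul f g \in DN2 A (a m)).
Proof.
have hn : (2 < n)%N by case/andP: (internal m) => /= h1 h2; have := ltn_ord (a m); lia.
destruct n as [|[|[|n]]]; try by [].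
move=> A.
have hA : forall x, x \in A -> (0 < x)%N && (x < n.+2)%N.
  move=> x /imsetP [i _ ->]; case/andP: (internal i) => /= h1 h2; have := ltn_ord (a i); lia.
have cA : a m \in A by apply: imset_f.
split.
  by apply/subsetP => f; rewrite (@DN2E n A (a m) cA) => /andP [].
move=> f g; rewrite !(@DN2E n A (a m) cA) => /andP [fs fc] /andP [gs gc].
have fo : order_preserving f by move: fs; rewrite simplexE => /andP [].
have go : order_preserving g by move: gs; rewrite simplexE => /andP [].
split.
  rewrite (@add_simplex n A (a m) cA f g fs gs) /=.
  case/orP: (@add_fib n A (a m) cA f g fo go) => /subset_leq_card h; [exact: leq_trans fc h | exact: leq_trans gc h].
rewrite mul_simplex //=.
exact: leq_trans fc (subset_leq_card (@mul_fib n (a m) f g (@fix_c n A hA (a m) cA g gs gc))).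
Qed.
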